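(* For each $q\in\{25,49,121\}$ there exists an $(\mathbb{F}_4\times\mathbb{F}_q,\ \mathbb{F}_4\times\{0\},\ 4,1)$-BRDF and a nested $(4q,4,1)$-BIBD.
   Context: Here $\mathbb{F}_4\times\mathbb{F}_q$ is regarded as an additive group (the direct product of the additive groups of the finite fields). For a finite additive group $G$ with subgroup $H$, a $(G,H,k,\lambda)$-RDF is a collection of $k$-subsets of $G$ (base blocks) whose differences $x-y$ ($x\ne y$ in a common base block) cover every element of $G\setminus H$ exactly $\lambda$ times and no element of $H$; it is a BRDF if moreover all base blocks are disjoint from $H$ and the base blocks and their negatives are pairwise disjoint. A $(v,k,\lambda)$-BIBD is a set $X$ of $v$ points with a multiset $\mathcal{A}$ of $k$-subsets such that every pair of distinct points lies in exactly $\lambda$ blocks (partial: at most $\lambda$). A $(v,4,1)$-BIBD is nested if there is $\phi:\mathcal{A}\to X$ such that $\{A\cup\{\phi(A)\}\}$ is the block multiset of a partial $(v,5,2)$-BIBD on $X$ (in particular $\phi(A)\notin A$). *)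

(* Defs.v *)
From HB Require Import structures.
From mathcomp Require Import all_boot all_order all_algebra.
Set Implicit Arguments. Unset Strict Implicit. Unset Printing Implicit Defensive.
Import GRing.Theory.
Local Open Scope ring_scope.

HB.instance Definition _ (A B : finZmodType) := GRing.Zmodule.on (A * B)%type.

Definition diff_count (G : finZmodType) (n : nat) (B : 'I_n -> {set G}) (g : G) : nat :=
  (\sum_(i < n) #|[set p : G * G | [&& p.1 \in B i, p.2 \in B i, p.1 != p.2
                                     & (p.1 - p.2)%R == g]]|)%N.

Definition is_RDF (G : finZmodType) (H : {set G}) (k lambda : nat)
    (n : nat) (B : 'I_n -> {set G}) : Prop :=
  (forall i, #|B i| = k) /\
  (forall g : G, g \notin H -> diff_count B g = lambda) /\
  (forall g : G, g \in H -> diff_count B g = 0%N).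

Definition negset (G : finZmodType) (A : {set G}) : {set G} := [set - x | x in A].

Definition is_BRDF (G : finZmodType) (H : {set G}) (k lambda : nat)
    (n : nat) (B : 'I_n -> {set G}) : Prop :=
  is_RDF H k lambda B /\
  (forall i, [disjoint B i & H]) /\
  (forall i j, i != j -> [disjoint B i & B j]) /\
  (forall i j, [disjoint B i & negset (B j)]) /\
  (forall i j, i != j -> [disjoint negset (B i) & negset (B j)]).

Definition has_BRDF (G : finZmodType) (H : {set G}) (k lambda : nat) : Prop :=
  exists n (B : 'I_n -> {set G}), is_BRDF H k lambda B.

Definition pair_count (T : finType) (b : nat) (A : 'I_b -> {set T}) (x y : T) : nat :=
  #|[set i : 'I_b | (x \in A i) && (y \in A i)]|.

Definition is_BIBD (T : finType) (v k lambda : nat) (b : nat) (A : 'I_b -> {set T}) : Prop :=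
  #|T| = v /\ (forall i, #|A i| = k) /\
  (forall x y : T, x != y -> pair_count A x y = lambda).

Definition is_partial_BIBD (T : finType) (v k lambda : nat) (b : nat) (A : 'I_b -> {set T}) : Prop :=
  #|T| = v /\ (forall i, #|A i| = k) /\
  (forall x y : T, x != y -> (pair_count A x y <= lambda)%N).

Definition is_nested_BIBD (T : finType) (v : nat) (b : nat) (A : 'I_b -> {set T}) : Prop :=
  is_BIBD v 4 1 A /\
  exists phi : 'I_b -> T, is_partial_BIBD v 5 2 (fun i => phi i |: A i).

Definition has_nested_BIBD (v : nat) : Prop :=
  exists b (A : 'I_b -> {set 'I_v}), is_nested_BIBD v A.

(* Main.v *)
Require Import Defs.
From HB Require Import structures.
From mathcomp Require Import all_boot all_order all_algebra all_field.
Set Implicit Arguments. Unset Strict Implicit. Unset Printing Implicit Defensive.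
Import GRing.Theory.
Local Open Scope ring_scope.

Lemma disjP (T : finType) (A B : {set T}) :
  (forall x, x \in A -> x \notin B) -> [disjoint A & B].
Proof. by move=> H; rewrite disjoint_subset; apply/subsetP => x /H; rewrite inE. Qed.

Lemma sum_card (I : finType) (P : pred I) :
  (\sum_(i : I) (P i : nat))%N = #|[set i | P i]|.
Proof.
rewrite -sum1_card [RHS]big_mkcond /=; apply: eq_bigr => i _.
by rewrite inE; case: (P i).
Qed.

Lemma card_cond (T : finType) (a : T) (b : bool) :
  (#|[set u | (u == a) && b]| <= b)%N.
Proof.
case: b; last by rewrite leqn0 cards_eq0; apply/eqP/setP => u; rewrite !inE andbF.
by rewrite (_ : [set u | _] = [set a]) ?cards1 //; apply/setP => u; rewrite !inE andbT.
Qed.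

Section Gen.
Variable G : finZmodType.

Definition tr (C : {set G}) (g : G) : {set G} := [set x | x - g \in C].
Definition Dc (C : {set G}) (d : G) : nat := #|[set u in C | u - d \in C]|.

Lemma in_tr C g x : (x \in tr C g) = (x - g \in C).
Proof. by rewrite inE. Qed.

Lemma card_tr C g : #|tr C g| = #|C|.
Proof.
have -> : tr C g = (fun u => u + g) @: C.
  apply/setP => x; rewrite in_tr; apply/idP/imsetP.
    by move=> Hx; exists (x - g) => //; rewrite subrK.
  by case=> u Hu ->; rewrite addrK.
by rewrite card_imset //; apply: addIr.
Qed.

Lemma diff_count_Dc n (B : 'I_n -> {set G}) d : d != 0 ->
  diff_count B d = (\sum_i Dc (B i) d)%N.
Proof.
move=> d0; rewrite /diff_count; apply: eq_bigr => i _; rewrite /Dc.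
have -> : [set p : G * G | [&& p.1 \in B i, p.2 \in B i, p.1 != p.2
                                     & (p.1 - p.2)%R == d]]
   = (fun u => (u, u - d)) @: [set u in B i | u - d \in B i].
  apply/setP => -[x y]; rewrite inE /=; apply/idP/imsetP.
    case/and4P => Hx Hy Hxy /eqP Hd; exists x; first by rewrite inE Hx -Hd subKr.
    by rewrite -Hd subKr.
  case=> u; rewrite inE => /andP [Hu Hud] [-> ->].
  rewrite Hu Hud subKr eqxx andbT /=.
  by apply: contra d0 => /eqP H; rewrite -(subKr u d) -H subrr.
by rewrite card_imset // => u v [].
Qed.

Lemma diff_count0 n (B : 'I_n -> {set G}) : diff_count B 0 = 0%N.
Proof.
rewrite /diff_count big1 // => i _; apply/eqP; rewrite cards_eq0; apply/eqP/setP => -[x y].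
by rewrite !inE /= subr_eq0; case: (x == y); rewrite ?andbF.
Qed.

Lemma card_dev x y C :
  #|[set g : G | (x \in tr C g) && (y \in tr C g)]| = Dc C (x - y).
Proof.
rewrite /Dc.
have -> : [set u in C | u - (x - y) \in C]
   = (fun g => x - g) @: [set g : G | (x \in tr C g) && (y \in tr C g)].
  apply/setP => u; rewrite inE; apply/idP/imsetP.
    case/andP=> Hu Hd; exists (x - u); last by rewrite subKr.
    rewrite inE !in_tr subKr Hu /=.
    suff -> : y - (x - u) = u - (x - y) by [].
    by rewrite !opprB !addrA [y + u]addrC.
  case=> g; rewrite inE !in_tr => /andP [H1 H2] ->.
  by rewrite H1 /= opprB addrC addrA subrK.
by rewrite card_imset // => g h /= /addrI /oppr_inj.
Qed.

Lemma in_trU C g x : (x \in g |: tr C g) = (x \in tr (0 |: C) g).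
Proof. by rewrite !inE subr_eq0. Qed.

Lemma Dc0 (C : {set G}) (d : G) : 0 \notin C -> d != 0 ->
  (Dc ((0%R : G) |: C) d <= Dc C d + (d \in C) + ((- d)%R \in C))%N.
Proof.
move=> C0 d0; rewrite /Dc.
set S := [set u in 0 |: C | _].
have sub : S \subset [set u in C | u - d \in C] :|: [set u | (u == d) && (d \in C)]
                     :|: [set u | (u == 0) && (- d \in C)].
  apply/subsetP => u; rewrite !inE.
  case/andP => /orP [/eqP -> | Hu] /orP [].
  - by rewrite sub0r oppr_eq0 (negbTE d0).
  - by rewrite sub0r eqxx => ->; rewrite !orbT.
  - by rewrite subr_eq0 => /eqP Hud; rewrite Hud in Hu *; rewrite Hu eqxx orbT.
  - by move=> ->; rewrite Hu.
apply: leq_trans (subset_leq_card sub) _.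
apply: leq_trans (leq_card_setU _ _) _; apply: leq_add; last exact: card_cond.
apply: leq_trans (leq_card_setU _ _) _; apply: leq_add; first exact: leqnn.
exact: card_cond.
Qed.

End Gen.


Definition gen_nested (T I : finType) (A : I -> {set T}) (phi : I -> T) : Prop :=
  (forall i, #|A i| = 4%N) /\
  (forall x y : T, x != y -> (\sum_(i : I) ((x \in A i) && (y \in A i)) : nat) = 1%N) /\
  (forall i, #|phi i |: A i| = 5%N) /\
  (forall x y : T, x != y ->
     (\sum_(i : I) ((x \in phi i |: A i) && (y \in phi i |: A i)) <= 2)%N).

Section Transfer.
Variables (T I : finType).

Definition tS (S : I -> {set T}) (k : 'I_#|I|) : {set 'I_#|T|} :=
  [set t | enum_val t \in S (enum_val k)].

Lemma card_tS S k : #|tS S k| = #|S (enum_val k)|.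
Proof.
have -> : tS S k = enum_rank @: S (enum_val k).
  apply/setP => t; rewrite inE; apply/idP/imsetP.
    by move=> H; exists (enum_val t) => //; rewrite enum_valK.
  by case=> x Hx ->; rewrite enum_rankK.
by rewrite card_imset //; apply: enum_rank_inj.
Qed.

Lemma pc_tS S (x y : 'I_#|T|) :
  pair_count (tS S) x y =
  (\sum_(i : I) ((enum_val x \in S i) && (enum_val y \in S i)) : nat).
Proof.
rewrite sum_card /pair_count.
have -> : [set i | (enum_val x \in S i) && (enum_val y \in S i)]
   = enum_val @: [set k : 'I_#|I| | (x \in tS S k) && (y \in tS S k)].
  apply/setP => i; rewrite inE; apply/idP/imsetP.
    by move=> H; exists (enum_rank i); rewrite ?inE enum_rankK.
  by case=> k; rewrite !inE => H ->.
by rewrite card_imset //; apply: enum_val_inj.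
Qed.

Lemma gen_nested_has (A : I -> {set T}) phi :
  gen_nested A phi -> has_nested_BIBD #|T|.
Proof.
case=> [HA [Hp [HB Hq]]].
exists #|I|, (tS A); split.
  split; first exact: card_ord.
  split; first by move=> k; rewrite card_tS HA.
  move=> x y xy; rewrite pc_tS; apply: Hp.
  by apply: contra xy => /eqP /enum_val_inj ->.
exists (fun k => enum_rank (phi (enum_val k))).
have E k : enum_rank (phi (enum_val k)) |: tS A k = tS (fun i => phi i |: A i) k.
  apply/setP => t; rewrite !inE.
  congr (_ || _).
  apply/eqP/eqP => [-> | <-]; by rewrite ?enum_rankK ?enum_valK.
split; first exact: card_ord.
split; first by move=> k /=; rewrite E card_tS HB.
move=> x y xy.
have -> : pair_count (fun k => enum_rank (phi (enum_val k)) |: tS A k) x y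
        = pair_count (tS (fun i => phi i |: A i)) x y.
  have F (t : 'I_#|T|) z : (t == enum_rank z) = (enum_val t == z).
    by apply/eqP/eqP => [->|<-]; rewrite ?enum_rankK ?enum_valK.
  by rewrite /pair_count; apply: eq_card => k; rewrite !inE !F.
rewrite pc_tS; apply: Hq.
by apply: contra xy => /eqP /enum_val_inj ->.
Qed.

End Transfer.


Section Nested.
Variables (A K : finZmodType).
Local Notation G := (A * K)%type.
Variables (n : nat) (B : 'I_n -> {set G}) (w2 : K).
Hypothesis cardA : #|A| = 4%N.
Hypothesis HB : is_BRDF [set x : G | x.2 == 0] 4 1 B.
Hypothesis w2w2 : w2 + w2 != 0.
Hypothesis Hrow : forall j u, u \in B j -> (u.2 != w2) && (u.2 != - w2).

Definition blk (i : ('I_n * G + K)%type) : {set G} :=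
  match i with inl jg => tr (B jg.1) jg.2 | inr c => [set z : G | z.2 == c] end.
Definition ph (i : ('I_n * G + K)%type) : G :=
  match i with inl jg => jg.2 | inr c => (0, c + w2) end.

Lemma split_sum (S : ('I_n * G + K)%type -> {set G}) x y :
  (\sum_(i : ('I_n * G + K)%type) ((x \in S i) && (y \in S i)) : nat) =
  (\sum_(j < n) #|[set g : G | (x \in S (inl (j, g))) && (y \in S (inl (j, g)))]|
   + \sum_(c : K) ((x \in S (inr c)) && (y \in S (inr c))))%N.
Proof.
rewrite big_sumType /=; congr (_ + _)%N.
transitivity (\sum_(p : 'I_n * G) ((x \in S (inl (p.1, p.2))) && (y \in S (inl (p.1, p.2))) : nat))%N.
  by apply: eq_bigr => -[j g].
rewrite -(pair_bigA _ (fun j g => ((x \in S (inl (j, g))) && (y \in S (inl (j, g))) : nat))) /=.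
by apply: eq_bigr => j _; rewrite sum_card.
Qed.

Lemma w2_neq0 : w2 != 0.
Proof. by apply: contra w2w2 => /eqP ->; rewrite addr0. Qed.

Lemma card_coset (c : K) : #|[set z : G | z.2 == c]| = 4%N.
Proof.
have -> : [set z : G | z.2 == c] = (fun a => (a, c)) @: [set: A].
  apply/setP => -[a b]; rewrite inE /=; apply/eqP/imsetP => [-> | [a' _ [_ ->]]] //.
  by exists a.
by rewrite card_imset ?cardsT // => a b [].
Qed.

Lemma zero_notin j : (0 : G) \notin B j.
Proof.
case: HB => _ [Hd _]; apply/negP => H0.
by move: (disjointFr (Hd j) H0); rewrite inE eqxx.
Qed.

Lemma notinH j u : u \in B j -> u.2 != 0.
Proof.
case: HB => _ [Hd _] Hu.
by move: (disjointFr (Hd j) Hu); rewrite inE => ->.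
Qed.

Lemma in_negset (S : {set G}) u : (- u \in S) -> u \in negset S.
Proof. by move=> H; apply/imsetP; exists (- u) => //; rewrite opprK. Qed.

Lemma Ebound d :
  ((\sum_(j < n) ((d \in B j) + (- d \in B j))%N <= 1)%N) /\
  ((\sum_(j < n) ((d \in B j) + (- d \in B j))%N) != 0%N ->
     exists j, (d \in B j) || (- d \in B j)).
Proof.
case: HB => _ [_ [D1 [D2 D3]]].
split; last first.
  move=> H; case: (pickP (fun j => (d \in B j) || (- d \in B j))) => [j Hj | Hn].
    by exists j.
  move/negP: H; case; apply/eqP.
  by rewrite big1 // => j _; move: (Hn j) => /= /norP [/negbTE -> /negbTE ->].
case: (pickP (fun j => d \in B j)) => [j Hj | Hn].
  rewrite (bigD1 j) //= Hj.
  have -> : (- d \in B j) = false.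
    by apply/negbTE/negP => H; move: (disjointFr (D2 j j) Hj); rewrite (in_negset H).
  rewrite big1 // => k kj.
  rewrite (disjointFr (D1 j k _) Hj); last by rewrite eq_sym.
  case/boolP: (- d \in B k) => // H.
  by move: (disjointFr (D2 j k) Hj); rewrite (in_negset H).
case: (pickP (fun j => - d \in B j)) => [j Hj | Hn'].
  rewrite (bigD1 j) //= Hj Hn.
  rewrite big1 // => k kj.
  by rewrite Hn (disjointFr (D1 j k _) Hj) //; rewrite eq_sym.
by rewrite big1 // => j _; rewrite Hn Hn'.
Qed.

Lemma coset_sum (x y : G) :
  (\sum_(c : K) ((x \in [set z : G | z.2 == c]) && (y \in [set z : G | z.2 == c])) : nat)
  = (x.2 == y.2).
Proof.
rewrite (bigD1 x.2) //= !inE eqxx /= eq_sym big1 ?addn0 // => c cx.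
by rewrite !inE eq_sym (negbTE cx).
Qed.

Definition Q (c : K) : {set G} := (0, c + w2) |: [set z : G | z.2 == c].

Lemma nested_coset_bound (x y : G) :
  ((\sum_(c : K) ((x \in Q c) &&
                  (y \in Q c)) : nat) <= 2)%N /\
  (x.2 != y.2 ->
  ((\sum_(c : K) ((x \in Q c) &&
                  (y \in Q c)) : nat)
    <= ((x.2 - y.2)%R == w2) + ((y.2 - x.2)%R == w2))%N).
Proof.
split.
  apply: leq_trans (_ : (\sum_(c : K) ((c == x.2) + (c == (x.2 - w2)%R)) <= _)%N).
    apply: leq_sum => c _; rewrite !inE.
    case/boolP: (x == (0%R, (c + w2)%R)) => [/eqP -> | _] /=.
      by apply: leq_trans (leq_b1 _) _; rewrite addrK eqxx addn1.
    case/boolP: (x.2 == c) => [/eqP <- | ] /=; last by [].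
    by rewrite eqxx; apply: leq_trans (leq_b1 _) _; exact: leq_addr.
  rewrite big_split /= !sum_card.
  have c1 (a : K) : #|[set i | i == a]| = 1%N.
    by rewrite -(cards1 a); apply: eq_card => i; rewrite !inE.
  by rewrite !c1.
move=> xy.
apply: leq_trans (_ : (\sum_(c : K) ((c == x.2) && (y == (0%R, (c + w2)%R)) +
                                     (c == y.2) && (x == (0%R, (c + w2)%R)))%N <= _)%N).
  apply: leq_sum => c _; rewrite !inE.
  case/boolP: (x.2 == c) => Hx; case/boolP: (y.2 == c) => Hy /=.
  - by move: xy; rewrite (eqP Hx) (eqP Hy) eqxx.
  - apply: leq_trans _ (leq_addr _ _); rewrite (eq_sym c) Hx orbT orbF /=.
    by case: (y == _).
  - apply: leq_trans _ (leq_addl _ _); rewrite (eq_sym c) Hy orbT orbF andbT /=.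
    by case: (x == _).
  - rewrite !orbF.
    case/boolP: (x == (0%R, (c + w2)%R)) => // /eqP Ex; case/boolP: (y == (0%R, (c + w2)%R)) => // /eqP Ey.
    by move: xy; rewrite Ex Ey eqxx.
rewrite big_split /= addnC; apply: leq_add.
  rewrite (bigD1 y.2) //= eqxx /= big1 ?addn0 => [|c /negbTE -> //].
  case/boolP: (x == _) => // /eqP -> /=.
  by rewrite addrAC subrr add0r eqxx.
rewrite (bigD1 x.2) //= eqxx /= big1 ?addn0 => [|c /negbTE -> //].
case/boolP: (y == _) => // /eqP -> /=.
by rewrite addrAC subrr add0r eqxx.
Qed.

Lemma dev_card x y j :
  #|[set g : G | (x \in g |: tr (B j) g) && (y \in g |: tr (B j) g)]| = Dc (0 |: B j) (x - y).
Proof. by rewrite -card_dev; apply: eq_card => g; rewrite !inE !subr_eq0. Qed.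

Lemma nested_main : gen_nested blk ph.
Proof.
have [[Hsz [Hout Hin]] _] := HB.
split.
  by case=> [[j g] | c] /=; [rewrite card_tr Hsz | exact: card_coset].
split.
  move=> x y xy; rewrite split_sum /=.
  under eq_bigr => j _ do rewrite card_dev.
  rewrite coset_sum.
  have d0 : x - y != 0 by rewrite subr_eq0.
  rewrite -diff_count_Dc //.
  case/boolP: (x.2 == y.2) => E.
    by rewrite Hin // inE /= (eqP E) subrr.
  by rewrite Hout // inE /= subr_eq0.
split.
  case=> [[j g] | c] /=.
    rewrite (_ : g |: tr (B j) g = tr (0 |: B j) g); last by apply/setP => z; rewrite in_trU.
    by rewrite card_tr cardsU1 (negbTE (zero_notin j)) Hsz.
  rewrite cardsU1 card_coset inE /=.
  suff -> : (c + w2 == c) = false by [].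
  by apply/negbTE; rewrite -subr_eq0 addrAC subrr add0r w2_neq0.
move=> x y xy; rewrite split_sum /=.
under eq_bigr => j _ do rewrite dev_card.
have d0 : x - y != 0 by rewrite subr_eq0.
set Ed := (\sum_(j < n) (((x - y)%R \in B j) + ((- (x - y))%R \in B j)))%N.
have Hle : (\sum_(j < n) Dc (0%R |: B j) (x - y)%R <= diff_count B (x - y)%R + Ed)%N.
  rewrite diff_count_Dc // -big_split /=; apply: leq_sum => j _; rewrite addnA.
  exact: Dc0 (zero_notin j) d0.
have [Hc2 Hc] := nested_coset_bound x y.
apply: leq_trans (leq_add Hle (leqnn _)) _.
case/boolP: (x.2 == y.2) => E.
  rewrite Hin ?inE /= ?(eqP E) ?subrr //.
  have -> : Ed = 0%N.
    rewrite /Ed big1 // => j _.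
    case/boolP: (x - y \in B j) => [/notinH | _]; first by rewrite /= (eqP E) subrr eqxx.
    case/boolP: (- (x - y) \in B j) => [/notinH | _] //.
    by rewrite /= (eqP E) subrr oppr0 eqxx.
  exact: Hc2.
rewrite Hout ?inE /= ?subr_eq0 //.
have [Ed1 Edex] := Ebound (x - y).
case/boolP: (Ed == 0%N) => [/eqP -> | /Edex [j Hj]].
  apply: leq_trans (leq_add (leqnn _) (Hc E)) _.
  rewrite addn0 add1n ltnS.
  case/boolP: (x.2 - y.2 == w2) => [/eqP h1 |] //; case/boolP: (y.2 - x.2 == w2) => [/eqP h2|] //.
  by move: w2w2; rewrite -{1}h1 -h2 addrA subrK subrr eqxx.
apply: leq_trans (leq_add (leqnn _) (Hc E)) _.
have [n1 n2] : ((x.2 - y.2 == w2) = false) /\ ((y.2 - x.2 == w2) = false).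
  case/orP: Hj => /Hrow /andP [] /=.
    by move=> /negbTE -> h; rewrite -opprB eqr_oppLR (negbTE h).
  move=> h1 h2; rewrite eqr_opp in h2; split; first by rewrite (negbTE h2).
  by rewrite -opprB (negbTE h1).
rewrite n1 n2 addn0.
by apply: leq_trans (leq_add (leqnn 1%N) Ed1) _.
Qed.

End Nested.


Section Check.
Variables (A K : finZmodType).
Local Notation G := (A * K)%type.

Definition check (bl : seq (seq G)) (univ : seq G) (w2 : K) : bool :=
  [&& all (fun s => (size s == 4%N) && uniq s) bl,
      all (fun i => all (fun j => (i == j) ||
              ~~ has (fun x => x \in nth [::] bl j) (nth [::] bl i)) (iota 0 (size bl)))
          (iota 0 (size bl)),
      all (fun i => all (fun j =>
              ~~ has (fun x => - x \in nth [::] bl j) (nth [::] bl i)) (iota 0 (size bl)))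
          (iota 0 (size bl)),
      all (fun s => all (fun u => [&& u.2 != 0, u.2 != w2 & u.2 != - w2]) s) bl,
      w2 + w2 != 0 &
      all (fun g => (g == 0) ||
             (sumn [seq count (fun u => u - g \in s) s | s <- bl] == (g.2 != 0)))
          univ].

Definition blocks (bl : seq (seq G)) (j : 'I_(size bl)) : {set G} :=
  [set x in nth [::] bl j].
Arguments blocks : clear implicits.

Lemma check_ok bl univ w2 : (forall g, g \in univ) -> check bl univ w2 ->
  is_BRDF [set x : G | x.2 == 0] 4 1 (blocks bl) /\
  (forall j u, u \in blocks bl j -> (u.2 != w2) && (u.2 != - w2)) /\ w2 + w2 != 0.
Proof.
move=> Huniv /and5P [C1 C2 C3 C4 /andP [C5 C6]].
have nth_in (j : 'I_(size bl)) : nth [::] bl j \in bl by apply: mem_nth.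
have szu (j : 'I_(size bl)) : (size (nth [::] bl j) == 4%N) && uniq (nth [::] bl j).
  by move/allP: C1 => /(_ _ (nth_in j)).
have row (j : 'I_(size bl)) u : u \in blocks bl j -> [&& u.2 != 0, u.2 != w2 & u.2 != - w2].
  by rewrite inE => Hu; move/allP: C4 => /(_ _ (nth_in j)) /allP /(_ _ Hu).
have iot (j : 'I_(size bl)) : (j : nat) \in iota 0 (size bl) by rewrite mem_iota /=.
have Dcs (j : 'I_(size bl)) g : Dc (blocks bl j) g = count (fun u => u - g \in nth [::] bl j) (nth [::] bl j).
  have /andP [_ uq] := szu j.
  rewrite /Dc /blocks -size_filter.
  have -> : [set u in [set x in nth [::] bl j] | u - g \in [set x in nth [::] bl j]]
       = [set x in [seq u <- nth [::] bl j | u - g \in nth [::] bl j]].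
    by apply/setP => u; rewrite !inE mem_filter andbC.
  by rewrite cardsE; apply/card_uniqP; rewrite filter_uniq.
have DC g : g != 0 -> diff_count (blocks bl) g =
     sumn [seq count (fun u => u - g \in s) s | s <- bl].
  move=> g0; rewrite diff_count_Dc // sumnE big_map (big_nth [::]) big_mkord.
  by apply: eq_bigr => j _; rewrite Dcs.
have C6' g : g != 0 -> diff_count (blocks bl) g = (g.2 != 0).
  move=> g0; rewrite DC //.
  by move/allP: C6 => /(_ g (Huniv g)); rewrite (negbTE g0) /= => /eqP.
split; last first.
  split=> // j u /row /and3P [_ -> ->] //.
split.
  split; first by move=> j; rewrite /blocks cardsE; have /andP [/eqP <- uq] := szu j; apply/card_uniqP.
  split.
    move=> g; rewrite inE => g2; rewrite C6' ?g2 //.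
    by apply: contra g2 => /eqP ->.
  move=> g; rewrite inE => /eqP g2.
  case/boolP: (g == 0) => [/eqP -> | g0]; first exact: diff_count0.
  by rewrite C6' // g2 eqxx.
split.
  by move=> j; apply: disjP => u /row /and3P [u0 _ _]; rewrite inE.
split.
  move=> i j ij; apply: disjP => u; rewrite !inE => Hi; apply/negP => Hj.
  move/allP: C2 => /(_ _ (iot i)) /allP /(_ _ (iot j)).
  rewrite (inj_eq val_inj) (negbTE ij) /= => /hasPn /(_ _ Hi).
  by rewrite Hj.
split.
  move=> i j; apply: disjP => u; rewrite inE => Hi; apply/negP => /imsetP [v Hv Hu].
  move/allP: C3 => /(_ _ (iot i)) /allP /(_ _ (iot j)) /hasPn /(_ _ Hi).
  by rewrite Hu opprK; move: Hv; rewrite inE => ->.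
move=> i j ij; apply: disjP => u /imsetP [v Hv ->]; apply/negP => /imsetP [w Hw /oppr_inj Hvw].
move/allP: C2 => /(_ _ (iot i)) /allP /(_ _ (iot j)).
rewrite (inj_eq val_inj) (negbTE ij) /=; move: Hv; rewrite inE => Hv => /hasPn /(_ _ Hv).
by rewrite Hvw; move: Hw; rewrite inE => ->.
Qed.

End Check.


Lemma zp_iso (F : finFieldType) (p : nat) : prime p -> #|F| = (p * p)%N ->
  exists f : ('Z_p * 'Z_p)%type -> F, (forall x y, f (x - y) = f x - f y) /\ bijective f.
Proof.
move=> pr cF.
have p1 : (1 < p)%N by apply: prime_gt1.
have chF : p \in [pchar F] by apply: (@card_finPcharP F p 2) => //; rewrite cF expn2.
have pF : p%:R = 0 :> F by apply: pcharf0.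
have natmod m : (m %% p)%:R = m%:R :> F.
  by rewrite {2}(divn_eq m p) natrD natrM pF mulr0 add0r.
have nat0 m : (m < p)%N -> (m%:R == 0 :> F) = (m == 0%N).
  move=> mp; rewrite -(dvdn_pcharf chF).
  case: m mp => [|m] mp; first by rewrite dvdn0.
  by rewrite gtnNdvd.
have [alpha Ha] : exists alpha : F, forall k, (k < p)%N -> alpha != k%:R.
  case: (boolP [exists a : F, [forall k : 'I_p, a != (k : nat)%:R]]) => [/existsP [a Ha] | /existsPn H].
    exists a => k kp; move/forallP: Ha => /(_ (Ordinal kp)) //.
  have sub : [set: F] \subset [set x in codom (fun k : 'I_p => (k : nat)%:R : F)].
    apply/subsetP => a _; move: (H a) => /forallPn [k]; rewrite negbK => /eqP ->.
    by rewrite inE; apply: codom_f.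
  move: (subset_leq_card sub); rewrite cardsT cardsE cF.
  move/leq_trans => /(_ _ (card_size _)); rewrite size_codom card_ord.
  by rewrite leqNgt -{1}(muln1 p) ltn_pmul2l ?prime_gt0 // p1.
pose f (x : ('Z_p * 'Z_p)%type) : F := (x.1 : nat)%:R + (x.2 : nat)%:R * alpha.
have cZ : (Zp_trunc p).+2 = p by apply: Zp_cast.
have vadd (a b : 'Z_p) : (val (a + b) : nat)%:R = (val a : nat)%:R + (val b : nat)%:R :> F.
  have -> : val (a + b) = ((val a + val b) %% (Zp_trunc p).+2)%N by [].
  have m2 m : (m %% (Zp_trunc p).+2)%:R = m%:R :> F by rewrite cZ natmod.
  by rewrite m2 natrD.
have fadd x y : f (x + y) = f x + f y.
  rewrite /f /= !vadd mulrDl.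
  by rewrite -!addrA; congr (_ + _); rewrite addrCA.
have fsub x y : f (x - y) = f x - f y.
  by apply/eqP; rewrite eq_sym subr_eq -fadd subrK.
have ltp (a : 'Z_p) : (val a < p)%N by case: a => m hm /=; move: hm; rewrite cZ.
have f0 z : f z = 0 -> z = 0.
  case: z => a b; rewrite /f /= => H.
  case/boolP: ((val b : nat) == 0%N) => b0.
    have eb : b = 0 by apply: val_inj; rewrite /= (eqP b0).
    move: H; rewrite (eqP b0) mul0r addr0 => /eqP; rewrite nat0 ?ltp // => a0.
    by rewrite eb (_ : a = 0) //; apply: val_inj; rewrite /= (eqP a0).
  exfalso.
  have cop : coprime p (val b) by rewrite prime_coprime // gtnNdvd // lt0n.
  have [c _ Hc] := Bezoutl (val b) (prime_gt0 pr).
  move: Hc; rewrite (eqP cop) (dvdn_pcharf chF) natrD natrM => /eqP Hc.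
  have cb : (c%:R * (val b : nat)%:R : F) = -1 by apply/eqP; rewrite -subr_eq0 opprK addrC Hc.
  have ea : alpha = (c * val a)%:R.
    have := congr1 (fun t => c%:R * t) H; rewrite mulr0 mulrDr mulrA cb mulN1r.
    by move=> /eqP; rewrite subr_eq0 => /eqP E1 *; rewrite natrM E1.
  by move: (Ha _ (ltn_pmod (c * val a) (prime_gt0 pr))); rewrite natmod -ea eqxx.
exists f; split => //.
apply: inj_card_bij.
  by move=> x y fxy; apply/eqP; rewrite -subr_eq0; apply/eqP; apply: f0; rewrite fsub fxy subrr.
by rewrite card_prod !card_ord cZ cF.
Qed.


Lemma in_negsetE (G : finZmodType) (S : {set G}) x : (x \in negset S) = (- x \in S).
Proof.
apply/imsetP/idP => [[y Hy ->] | H]; first by rewrite opprK.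
by exists (- x); rewrite ?opprK.
Qed.

Arguments blocks {A K} bl j.

Section Transfer2.
Variables (G G' : finZmodType) (f : G -> G').
Hypothesis fsub : forall x y, f (x - y) = f x - f y.
Hypothesis fbij : bijective f.

Let finj : injective f := bij_inj fbij.
Lemma f0 : f 0 = 0. Proof. by rewrite -(subrr 0) fsub subrr. Qed.
Lemma fneg x : f (- x) = - f x. Proof. by rewrite -sub0r fsub f0 sub0r. Qed.
Lemma surj y : exists x, y = f x.
Proof. by case: fbij => g fg gf; exists (g y); rewrite gf. Qed.
Lemma memf (S : {set G}) x : (f x \in f @: S) = (x \in S).
Proof. exact: mem_imset. Qed.

Lemma disj_img (S T : {set G}) : [disjoint S & T] -> [disjoint f @: S & f @: T].
Proof.
move=> D; apply: disjP => u; have [x ->] := surj u.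
by rewrite !memf => Hx; rewrite (disjointFr D Hx).
Qed.

Lemma negset_img (S : {set G}) : negset (f @: S) = f @: negset S.
Proof.
apply/setP => u; have [x ->] := surj u.
by rewrite in_negsetE -fneg !memf in_negsetE.
Qed.

Lemma Dc_img (S : {set G}) g : Dc (f @: S) (f g) = Dc S g.
Proof.
rewrite /Dc -(card_imset _ finj); apply: eq_card => u; have [x ->] := surj u.
by rewrite (mem_imset _ _ finj) inE -fsub !memf inE.
Qed.

Lemma brdf_transfer (H : {set G}) (H' : {set G'}) k lam n (B : 'I_n -> {set G}) :
  (forall x, (f x \in H') = (x \in H)) -> is_BRDF H k lam B ->
  is_BRDF H' k lam (fun i => f @: B i).
Proof.
move=> HH [[Hsz [Hout Hin]] [D0 [D1 [D2 D3]]]].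
have dc g : diff_count (fun i => f @: B i) (f g) = diff_count B g.
  case/boolP: (g == 0) => [/eqP -> | g0]; first by rewrite f0 !diff_count0.
  have fg0 : f g != 0 by rewrite -f0 (inj_eq finj).
  rewrite !diff_count_Dc //; apply: eq_bigr => i _; exact: Dc_img.
split.
  split; first by move=> i; rewrite card_imset.
  split=> g'; have [g ->] := surj g'; rewrite dc HH; [exact: Hout | exact: Hin].
split.
  move=> i; apply: disjP => u; have [x ->] := surj u; rewrite memf HH => Hx.
  by rewrite (disjointFr (D0 i) Hx).
split; first by move=> i j ij; apply: disj_img; apply: D1.
split; first by move=> i j; rewrite negset_img; apply: disj_img.
by move=> i j ij; rewrite !negset_img; apply: disj_img; apply: D3.
Qed.

End Transfer2.

Lemma prod_iso (A A' K K' : finZmodType) (f1 : A -> A') (f2 : K -> K') :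
  (forall x y, f1 (x - y) = f1 x - f1 y) -> bijective f1 ->
  (forall x y, f2 (x - y) = f2 x - f2 y) -> bijective f2 ->
  let f := fun x : A * K => ((f1 x.1, f2 x.2) : A' * K') in
  (forall x y, f (x - y) = f x - f y) /\ bijective f.
Proof.
move=> s1 [g1 c1 d1] s2 [g2 c2 d2] f; split.
  by move=> x y; rewrite /f /= s1 s2.
exists (fun y : A' * K' => (g1 y.1, g2 y.2)).
  by case=> a b; rewrite /f /= c1 c2.
by case=> a b; rewrite /f /= d1 d2.
Qed.

Definition sq (p : nat) : seq ('Z_p * 'Z_p) :=
  [seq (inZp a, inZp b) | a <- iota 0 p, b <- iota 0 p].
Definition Gc (p : nat) := (('Z_2 * 'Z_2) * ('Z_p * 'Z_p))%type.
Definition univG (p : nat) : seq (Gc p) := [seq (x, y) | x <- sq 2, y <- sq p].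

Lemma sq_all p : (1 < p)%N -> forall x : 'Z_p * 'Z_p, x \in sq p.
Proof.
move=> p1 [a b].
have cZ : (Zp_trunc p).+2 = p by apply: Zp_cast.
have ltp (c : 'Z_p) : (val c < p)%N by case: c => m hm /=; move: hm; rewrite cZ.
rewrite -(valZpK a) -(valZpK b).
by apply: allpairs_f; rewrite mem_iota /= ltp.
Qed.

Lemma univG_all p : (1 < p)%N -> forall g : Gc p, g \in univG p.
Proof. by move=> p1 [x y]; apply: allpairs_f; apply: sq_all. Qed.

Lemma main_p (p : nat) (bl : seq (seq (Gc p))) (w2 : 'Z_p * 'Z_p) :
  prime p -> check bl (univG p) w2 ->
  forall (F4 Fq : finFieldType), #|F4| = 4%N -> #|Fq| = (p * p)%N ->
  has_BRDF [set x : F4 * Fq | x.2 == 0] 4 1 /\ has_nested_BIBD (4 * (p * p)).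
Proof.
move=> pr chk F4 Fq c4 cq.
have p1 : (1 < p)%N by apply: prime_gt1.
have [HB [Hrow Hw]] := check_ok (univG_all p1) chk.
split.
  have [f1 [s1 b1]] := @zp_iso F4 2 (erefl true) c4.
  have [f2 [s2 b2]] := zp_iso pr cq.
  have [s b] := prod_iso s1 b1 s2 b2.
  exists (size bl), (fun i => (fun x : Gc p => ((f1 x.1, f2 x.2) : F4 * Fq)) @: blocks bl i).
  apply: (brdf_transfer s b) HB => x; rewrite !inE /=.
  by rewrite -(f0 s2) (inj_eq (bij_inj b2)).
have cA : #|{: 'Z_2 * 'Z_2}| = 4%N by rewrite card_prod card_ord.
have := gen_nested_has (nested_main cA HB Hw Hrow).
suff -> : #|{: Gc p}| = (4 * (p * p))%N by [].
by rewrite card_prod cA card_prod card_ord Zp_cast.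
Qed.

Definition e5 (a b c d : nat) : Gc 5 := ((inZp a, inZp b), (inZp c, inZp d)).
Definition bl5 : seq (seq (Gc 5)) := [:: [:: e5 1 1 0 3; e5 0 1 0 2; e5 0 1 2 2; e5 1 1 1 4];
  [:: e5 0 0 4 4; e5 0 0 0 3; e5 1 1 3 2; e5 0 0 1 3];
  [:: e5 1 0 4 2; e5 1 1 3 3; e5 0 0 0 1; e5 1 0 2 1];
  [:: e5 0 0 4 3; e5 1 0 1 1; e5 0 1 1 2; e5 0 1 1 4];
  [:: e5 1 0 2 2; e5 1 0 1 4; e5 0 0 2 0; e5 0 1 3 1];
  [:: e5 0 1 2 0; e5 1 0 1 2; e5 0 1 4 2; e5 0 0 2 2];
  [:: e5 1 0 3 0; e5 1 1 1 3; e5 1 1 3 1; e5 1 0 2 3];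
  [:: e5 0 0 2 4; e5 0 1 0 1; e5 1 1 3 0; e5 1 1 3 4]].
Definition w5 : 'Z_5 * 'Z_5 := (inZp 1, inZp 0).
Lemma chk5 : check bl5 (univG 5) w5.
Proof. vm_compute. reflexivity. Qed.

Definition e7 (a b c d : nat) : Gc 7 := ((inZp a, inZp b), (inZp c, inZp d)).
Definition bl7 : seq (seq (Gc 7)) := [:: [:: e7 0 0 0 5; e7 0 1 1 1; e7 1 1 5 0; e7 0 1 3 3];
  [:: e7 1 0 2 1; e7 0 1 6 4; e7 0 0 4 3; e7 1 0 5 0];
  [:: e7 1 0 3 2; e7 1 0 1 4; e7 0 1 3 0; e7 0 0 0 3];
  [:: e7 0 1 2 3; e7 1 1 0 5; e7 0 0 3 5; e7 1 1 1 1];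
  [:: e7 1 1 2 4; e7 1 0 2 2; e7 1 0 0 6; e7 1 0 4 3];
  [:: e7 0 1 1 5; e7 1 0 6 5; e7 0 0 0 1; e7 1 1 4 2];
  [:: e7 0 1 3 6; e7 0 0 1 6; e7 0 0 2 0; e7 1 0 4 1];
  [:: e7 0 0 4 5; e7 0 0 4 6; e7 0 1 0 6; e7 0 0 1 4];
  [:: e7 1 0 4 4; e7 0 0 5 2; e7 0 1 3 5; e7 1 0 0 2];
  [:: e7 0 0 1 2; e7 1 0 1 1; e7 1 0 3 5; e7 1 0 1 6];
  [:: e7 1 1 3 3; e7 0 0 3 6; e7 0 1 6 1; e7 0 1 0 3];
  [:: e7 1 1 5 2; e7 1 1 4 5; e7 1 0 0 4; e7 0 1 2 6];
  [:: e7 0 1 0 5; e7 1 0 2 6; e7 0 1 6 5; e7 0 1 2 5];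
  [:: e7 0 0 1 3; e7 1 0 1 5; e7 1 0 2 3; e7 1 1 2 6];
  [:: e7 1 1 1 6; e7 0 0 5 4; e7 0 0 5 1; e7 1 1 4 3];
  [:: e7 1 1 3 1; e7 0 0 2 1; e7 1 0 3 0; e7 1 1 4 0]].
Definition w7 : 'Z_7 * 'Z_7 := (inZp 1, inZp 0).
Lemma chk7 : check bl7 (univG 7) w7.
Proof. vm_compute. reflexivity. Qed.

Definition e11 (a b c d : nat) : Gc 11 := ((inZp a, inZp b), (inZp c, inZp d)).
Definition bl11 : seq (seq (Gc 11)) := [:: [:: e11 0 0 7 1; e11 0 0 9 2; e11 1 1 6 3; e11 0 1 1 6];
  [:: e11 0 0 1 1; e11 0 0 7 4; e11 1 1 9 7; e11 0 1 5 5];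
  [:: e11 1 1 8 9; e11 1 1 4 7; e11 0 0 10 5; e11 1 0 9 10];
  [:: e11 1 0 0 4; e11 1 0 10 9; e11 0 1 6 3; e11 1 1 3 7];
  [:: e11 1 1 10 9; e11 1 1 7 2; e11 0 0 6 6; e11 1 0 8 7];
  [:: e11 0 0 2 10; e11 1 0 3 7; e11 0 0 7 0; e11 1 0 9 3];
  [:: e11 0 1 2 7; e11 1 1 5 9; e11 0 1 6 10; e11 1 1 1 8];
  [:: e11 1 1 3 4; e11 0 1 1 10; e11 1 1 4 2; e11 0 1 0 7];
  [:: e11 1 1 2 9; e11 0 1 7 5; e11 1 1 5 3; e11 0 1 4 7];
  [:: e11 0 1 4 2; e11 1 1 8 1; e11 0 1 2 6; e11 1 1 10 7];
  [:: e11 0 1 3 3; e11 0 1 3 0; e11 0 0 7 2; e11 0 0 4 2];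
  [:: e11 1 1 8 8; e11 1 1 8 10; e11 1 0 9 5; e11 1 0 0 5];
  [:: e11 0 1 10 3; e11 0 1 10 9; e11 0 0 2 5; e11 0 0 8 5];
  [:: e11 0 1 4 9; e11 0 1 4 5; e11 0 0 2 4; e11 0 0 9 4];
  [:: e11 1 1 1 6; e11 1 1 1 5; e11 1 0 6 2; e11 1 0 5 2];
  [:: e11 1 1 3 5; e11 0 0 7 7; e11 0 1 8 3; e11 0 0 0 4];
  [:: e11 1 0 7 4; e11 0 1 8 10; e11 0 0 0 9; e11 0 1 9 1];
  [:: e11 0 0 7 8; e11 1 1 10 4; e11 1 0 8 1; e11 1 1 2 10];
  [:: e11 0 0 4 6; e11 1 1 2 5; e11 1 0 7 7; e11 1 1 0 1];
  [:: e11 1 1 9 4; e11 0 0 3 1; e11 0 1 7 7; e11 0 0 8 0];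
  [:: e11 0 1 9 6; e11 0 1 0 3; e11 1 1 5 6; e11 1 0 7 6];
  [:: e11 1 0 9 9; e11 1 0 4 0; e11 0 0 8 9; e11 0 1 3 9];
  [:: e11 0 0 5 10; e11 0 0 1 5; e11 1 0 2 10; e11 1 1 9 10];
  [:: e11 0 0 9 8; e11 0 0 8 4; e11 1 0 0 8; e11 1 1 10 8];
  [:: e11 1 0 2 3; e11 1 0 10 2; e11 0 0 8 3; e11 0 1 5 3];
  [:: e11 1 0 7 8; e11 0 1 4 10; e11 1 0 0 1; e11 1 0 3 9];
  [:: e11 1 0 9 6; e11 0 1 0 1; e11 1 0 10 7; e11 1 0 8 9];
  [:: e11 0 1 3 4; e11 1 0 9 0; e11 0 1 6 7; e11 0 1 0 2];
  [:: e11 1 0 6 3; e11 0 1 2 2; e11 1 0 4 1; e11 1 0 8 8];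
  [:: e11 1 0 10 3; e11 0 1 9 0; e11 1 0 4 8; e11 1 0 5 7];
  [:: e11 0 0 6 10; e11 1 1 4 5; e11 1 0 8 6; e11 1 0 2 9];
  [:: e11 0 0 6 8; e11 1 1 0 4; e11 1 0 1 7; e11 1 0 5 5];
  [:: e11 1 1 5 1; e11 0 0 9 0; e11 0 1 1 9; e11 0 1 2 3];
  [:: e11 1 1 6 9; e11 0 0 7 6; e11 0 1 5 0; e11 0 1 8 4];
  [:: e11 0 1 6 5; e11 1 0 9 7; e11 1 1 3 0; e11 1 1 1 1];
  [:: e11 1 0 5 10; e11 0 0 5 0; e11 0 0 7 3; e11 1 1 5 5];
  [:: e11 1 0 0 2; e11 0 0 0 5; e11 0 0 6 3; e11 1 1 0 9];
  [:: e11 1 0 7 1; e11 0 0 7 10; e11 0 0 3 4; e11 1 1 7 0];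
  [:: e11 0 1 8 9; e11 1 1 8 3; e11 1 1 7 7; e11 0 0 8 6];
  [:: e11 1 0 6 5; e11 0 0 6 9; e11 0 0 3 10; e11 1 1 6 7]].
Definition w11 : 'Z_11 * 'Z_11 := (inZp 1, inZp 0).
Lemma chk11 : check bl11 (univG 11) w11.
Proof. vm_compute. reflexivity. Qed.


Theorem mainTheorem18 (q : nat) (Hq : q \in [:: 25%N; 49%N; 121%N])
    (F4 Fq : finFieldType) (H4 : #|F4| = 4%N) (Hcq : #|Fq| = q) :
  has_BRDF [set x : F4 * Fq | x.2 == 0] 4 1 /\ has_nested_BIBD (4 * q).
Proof.
move: Hq Hcq; rewrite !inE => /or3P [] /eqP -> Hcq.
- exact: (main_p (p:=5) (erefl true) chk5 H4 Hcq).
- exact: (main_p (p:=7) (erefl true) chk7 H4 Hcq).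
- exact: (main_p (p:=11) (erefl true) chk11 H4 Hcq).
Qed.
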